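(* Consider the convex program $$\min F(x)\quad\text{subject to } G_i(x)\le b_i\ (i=1,\dots,m),\quad l\le x\le u,$$ with variables $x\in\mathbb{R}^n$, where $F$ and each $G_i$ are convex and differentiable on the box domain $B=\{x: l\le x\le u\}$. Let $(\mathcal{P},\mathcal{Q})$ be a reduction coloring of this program. Then: (i) if $x$ is an optimal solution of the original program, then $x'=\Pi_{\mathcal{Q}}^{\mathrm{Scaled}}x$ is an optimal solution of the reduced program; (ii) if $x'$ is an optimal solution of the reduced program, then $x=\Pi_{\mathcal{Q}}x'$ is an optimal solution of the original program.
   Context: A partition of a finite set $V$ is a set of nonempty pairwise disjoint subsets (''colors'') whose union is $V$. For a partition $\mathcal{Q}$ of $\{1,\dots,n\}$, the partition matrix $\Pi_{\mathcal{Q}}\in\{0,1\}^{n\times|\mathcal{Q}|}$ has $(\Pi_{\mathcal{Q}})_{jT}=1$ if $j\in T$ and $0$ otherwise; $\Pi_{\mathcal{Q}}^{\mathrm{Scaled}}\in\mathbb{R}^{|\mathcal{Q}|\times n}$ is $\Pi_{\mathcal{Q}}^\top$ with each row normalized to sum to $1$, i.e. $(\Pi_{\mathcal{Q}}^{\mathrm{Scaled}})_{Tj}=1/|T|$ if $j\in T$ and $0$ otherwise. A point $\hat x\in\mathbb{R}^n$ is called $\mathcal{Q}$-constant if $\hat x_{j_1}=\hat x_{j_2}$ whenever $j_1,j_2$ lie in the same color of $\mathcal{Q}$. Reduction coloring: a partition $\mathcal{P}$ of the constraint indices $\{1,\dots,m\}$ and a partition $\mathcal{Q}$ of the variable indices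 $\{1,\dots,n\}$ form a reduction coloring if (a) for each $T\in\mathcal{Q}$, $(l_j,u_j)$ is the same for all $j\in T$; (b) for each $S\in\mathcal{P}$, $b_i$ is the same for all $i\in S$; and for every $\mathcal{Q}$-constant $\hat x\in B$: (c) for each $T\in\mathcal{Q}$ and $j_1,j_2\in T$, $\partial F/\partial x_{j_1}(\hat x)=\partial F/\partial x_{j_2}(\hat x)$; (d) for each $S\in\mathcal{P}$, $T\in\mathcal{Q}$ and $j_1,j_2\in T$, $\partial(\sum_{i\in S}G_i)/\partial x_{j_1}(\hat x)=\partial(\sum_{i\in S}G_i)/\partial x_{j_2}(\hat x)$; (e) for each $S\in\mathcal{P}$, $G_i(\hat x)$ is the same for all $i\in S$. Reduced program: variables $x'\in\mathbb{R}^{|\mathcal{Q}|}$; objective $F'(x')=F(\Pi_{\mathcal{Q}}x')$; for each $S\in\mathcal{P}$ one constraint $G'_S(x')=G_i(\Pi_{\mathcal{Q}}x')\le b'_S$ (any $i\in S$; well defined by (e)), where $b'=\Pi_{\mathcal{P}}^{\mathrm{Scaled}}b$; box constraints $l'\le x'\le u'$ with $l'=\Pi_{\mathcal{Q}}^{\mathrm{Scaled}}l$, $u'=\Pi_{\mathcal{Q}}^{\mathrm{Scaled}}u$. *)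

(* Defs.v *)
From HB Require Import structures.
From mathcomp Require Import all_boot all_order all_algebra.
From mathcomp Require Import all_classical all_reals.
From mathcomp Require Import topology normedtype derive.
Set Implicit Arguments. Unset Strict Implicit. Unset Printing Implicit Defensive.
Import Order.TTheory GRing.Theory Num.Theory.
Import numFieldNormedType.Exports.
Local Open Scope ring_scope.

Section Defs.
Variable R : realType.

Definition in_box (k : nat) (l u x : 'cV[R]_k) : Prop :=
  forall j : 'I_k, l j 0 <= x j 0 <= u j 0.

Definition convex_on_box (k : nat) (l u : 'cV[R]_k) (f : 'cV[R]_k -> R) : Prop :=
  forall x y : 'cV[R]_k, in_box l u x -> in_box l u y ->
  forall t : R, 0 <= t <= 1 ->
    f (t *: x + (1 - t) *: y) <= t * f x + (1 - t) * f y.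

Definition differentiable_on_box (k : nat) (l u : 'cV[R]_k) (f : 'cV[R]_k -> R)
  : Prop := forall x : 'cV[R]_k, in_box l u x -> differentiable f x.

Definition partial (k : nat) (f : 'cV[R]_k -> R) (j : 'I_k) (x : 'cV[R]_k) : R :=
  'D_(delta_mx j 0 : 'cV[R]_k) f x.

Definition feasible (k : nat) (I : finType) (g : I -> 'cV[R]_k -> R) (c : I -> R)
  (l u x : 'cV[R]_k) : Prop :=
  (forall i : I, g i x <= c i) /\ in_box l u x.

Definition optimal (k : nat) (I : finType) (f : 'cV[R]_k -> R)
  (g : I -> 'cV[R]_k -> R) (c : I -> R) (l u x : 'cV[R]_k) : Prop :=
  feasible g c l u x /\
  forall y : 'cV[R]_k, feasible g c l u y -> f x <= f y.

Definition color (T : finType) (Q : {set {set T}}) (k : 'I_#|Q|) : {set T} :=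
  enum_val k.

Definition part_mx (n : nat) (Q : {set {set 'I_n}}) : 'M[R]_(n, #|Q|) :=
  \matrix_(j < n, k < #|Q|) (j \in color k)%:R.

Definition part_mx_scaled (n : nat) (Q : {set {set 'I_n}}) : 'M[R]_(#|Q|, n) :=
  \matrix_(k < #|Q|, j < n) ((j \in color k)%:R / #|color k|%:R).

Definition Q_constant (n : nat) (Q : {set {set 'I_n}}) (x : 'cV[R]_n) : Prop :=
  forall T, T \in Q -> forall j1 j2, j1 \in T -> j2 \in T -> x j1 0 = x j2 0.

Definition reduction_coloring (m n : nat) (F : 'cV[R]_n -> R)
  (G : 'I_m -> 'cV[R]_n -> R) (b : 'cV[R]_m) (l u : 'cV[R]_n)
  (P : {set {set 'I_m}}) (Q : {set {set 'I_n}}) : Prop :=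
  finset.partition P [set: 'I_m] /\ finset.partition Q [set: 'I_n] /\
  (forall T, T \in Q -> forall j1 j2, j1 \in T -> j2 \in T ->
     l j1 0 = l j2 0 /\ u j1 0 = u j2 0) /\
  (forall S, S \in P -> forall i1 i2, i1 \in S -> i2 \in S -> b i1 0 = b i2 0) /\
  (forall xh : 'cV[R]_n, Q_constant Q xh -> in_box l u xh ->
    (forall T, T \in Q -> forall j1 j2, j1 \in T -> j2 \in T ->
       partial F j1 xh = partial F j2 xh) /\
    (forall S, S \in P -> forall T, T \in Q -> forall j1 j2, j1 \in T -> j2 \in T ->
       partial (fun x => \sum_(i in S) G i x) j1 xh =
       partial (fun x => \sum_(i in S) G i x) j2 xh) /\
    (forall S, S \in P -> forall i1 i2, i1 \in S -> i2 \in S -> G i1 xh = G i2 xh)).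

(* the reduced program; rep k is the chosen representative i of color k of P *)
Definition reduced_optimal (m n : nat) (F : 'cV[R]_n -> R)
  (G : 'I_m -> 'cV[R]_n -> R) (b : 'cV[R]_m) (l u : 'cV[R]_n)
  (P : {set {set 'I_m}}) (Q : {set {set 'I_n}}) (rep : 'I_#|P| -> 'I_m)
  (x' : 'cV[R]_#|Q|) : Prop :=
  optimal (fun y => F (part_mx Q *m y))
          (fun k y => G (rep k) (part_mx Q *m y))
          (fun k => (part_mx_scaled P *m b) k 0)
          (part_mx_scaled Q *m l) (part_mx_scaled Q *m u) x'.

End Defs.
Arguments reduced_optimal {R m n} F G b l u P Q rep x'.
Arguments reduction_coloring {R m n} F G b l u P Q.
Arguments part_mx {R n} Q.
Arguments part_mx_scaled {R n} Q.

(* Main.v *)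
Require Import Defs.
From HB Require Import structures.
From mathcomp Require Import all_boot all_order all_algebra.
From mathcomp Require Import all_classical all_reals.
From mathcomp Require Import topology normedtype derive.
From mathcomp Require Import ring lra.
Set Implicit Arguments. Unset Strict Implicit. Unset Printing Implicit Defensive.
Import Order.TTheory GRing.Theory Num.Theory.
Import numFieldNormedType.Exports.
Local Open Scope ring_scope.
Local Open Scope classical_set_scope.
Section A.
Variable R : realType.
Variable k : nat.

Lemma grad_ineq (l u : 'cV[R]_k) (f : 'cV[R]_k -> R) x y :
  convex_on_box l u f -> differentiable f x ->
  in_box l u x -> in_box l u y -> f x + 'D_(y - x) f x <= f y.
Proof.
move=> cf df bx by_.
rewrite -lerBrDl.
have dv : derivable f x (y - x) by exact: diff_derivable.
have cv : (fun h : R => h^-1 *: ((f \o shift x) (h *: (y - x)) - f x)) @ 0^'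
   --> 'D_(y - x) f x by exact: dv.
have cv' : (fun h : R => h^-1 *: ((f \o shift x) (h *: (y - x)) - f x)) @ 0^'+
   --> 'D_(y - x) f x.
  move=> U /cv; rewrite !near_simpl /= !near_withinE.
  by apply: filterS => h Hh hpos; apply: Hh; rewrite gt_eqF.
apply: (cvgr_to_le cv').
near=> h.
have h0 : 0 < h by near: h; exact: nbhs_right_gt.
have h1 : h < 1 by near: h; exact: nbhs_right_lt.
rewrite /= -[_ *: _]/(h^-1 * _) ler_pdivrMl // lerBlDl.
have -> : h *: (y - x) + x = h *: y + (1 - h) *: x.
  by rewrite scalerBr scalerBl scale1r -addrA [- _ + x]addrC.
apply: le_trans (cf _ _ by_ bx h _) _.
  by rewrite (ltW h0) (ltW h1).
by rewrite le_eqVlt; apply/orP; left; apply/eqP; ring.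
Unshelve. all: by end_near. Qed.
Lemma D_decomp (f : 'cV[R]_k -> R) x v : differentiable f x ->
  'D_v f x = \sum_j v j 0 * partial f j x.
Proof.
move=> df; rewrite /partial deriveE // {1}(matrix_sum_delta v) linear_sum.
by apply: eq_bigr => j _; rewrite big_ord1 linearZ /= deriveE.

Qed.

Lemma diff_sum (I : finType) (S : {set I}) (G : I -> 'cV[R]_k -> R) x :
  (forall i, differentiable (G i) x) ->
  differentiable (fun y => \sum_(i in S) G i y) x.
Proof.
move=> dG.
have -> : (fun y => \sum_(i in S) G i y) = \sum_(i in S) G i by rewrite fct_sumE.
elim/big_ind: _ => //.
by move=> f g df dg; apply: differentiableD.
Qed.
Lemma conv_sum (I : finType) (S : {set I}) (G : I -> 'cV[R]_k -> R) l u :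
  (forall i, convex_on_box l u (G i)) ->
  convex_on_box l u (fun y => \sum_(i in S) G i y).
Proof.
move=> cG x y bx hy t ht; rewrite !mulr_sumr -big_split; apply: ler_sum => i _.
exact: cG.
Qed.
End A.
Section B.
Variable R : realType.
Variable p : nat.
Variable Q : {set {set 'I_p}}.
Hypothesis hQ : finset.partition Q [set: 'I_p].

Lemma colorQ (k : 'I_#|Q|) : color k \in Q.
Proof. exact: enum_valP. Qed.

Lemma color_of T : T \in Q -> exists k : 'I_#|Q|, color k = T.
Proof. by move=> TQ; exists (enum_rank_in TQ T); rewrite /color enum_rankK_in. Qed.

Lemma color_ex j : exists k : 'I_#|Q|, j \in color k.
Proof.
case/and3P: hQ => /eqP cov _ _.
have : j \in finset.cover Q by rewrite cov inE.
case/finset.bigcupP => T TQ jT; case: (color_of TQ) => k Hk; exists k; by rewrite Hk.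
Qed.

Lemma color_uniq j (k1 k2 : 'I_#|Q|) : j \in color k1 -> j \in color k2 -> k1 = k2.
Proof.
case/and3P: hQ => _ triv _ h1 h2; apply: enum_val_inj.
have e1 := def_pblock triv (colorQ k1) h1; have e2 := def_pblock triv (colorQ k2) h2.
by rewrite /color in e1 e2; rewrite -e1 -e2.
Qed.

Lemma color_n0 (k : 'I_#|Q|) : (0 < #|color k|)%N.
Proof.
case/and3P: hQ => _ _ nz; rewrite card_gt0; apply/negP => /eqP e.
by move: (colorQ k); rewrite e (negbTE nz).
Qed.

Lemma partE (x' : 'cV[R]_#|Q|) j (k : 'I_#|Q|) : j \in color k ->
  (part_mx Q *m x') j 0 = x' k 0.
Proof.
move=> jk; rewrite mxE (bigD1 k) //= big1 ?addr0; first by rewrite mxE jk /= mul1r.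
move=> k' nk; rewrite mxE; case: (boolP (j \in color k')) => h; last by rewrite mul0r.
by case/eqP: nk; apply: (color_uniq h jk).
Qed.

Lemma scaledE (y : 'cV[R]_p) (k : 'I_#|Q|) : (part_mx_scaled Q *m y) k 0 =
  (\sum_(j in color k) y j 0) / #|color k|%:R.
Proof.
rewrite mxE mulr_suml [RHS]big_mkcond /=; apply: eq_bigr => j _; rewrite mxE.
by case: (boolP (j \in color k)) => _ /=; rewrite ?mul0r ?div0r // mul1r mulrC.
Qed.

Lemma sum_colors (a : 'I_p -> R) : \sum_j a j = \sum_(k < #|Q|) \sum_(j in color k) a j.
Proof.
under [RHS]eq_bigr => k _ do rewrite big_mkcond.
rewrite exchange_big; apply: eq_bigr => j _.
case: (color_ex j) => k jk; rewrite (bigD1 k) //= jk big1 ?addr0 //.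
move=> k' nk; case: ifP => // h; case/eqP: nk; exact: color_uniq h jk.
Qed.

Lemma scaled_const (y : 'cV[R]_p) (k : 'I_#|Q|) c :
  (forall j, j \in color k -> y j 0 = c) -> (part_mx_scaled Q *m y) k 0 = c.
Proof.
move=> h; rewrite scaledE (eq_bigr (fun _ => c)) // sumr_const -[c *+ _]mulr_natr.
rewrite mulfK // pnatr_eq0 -lt0n; exact: color_n0.
Qed.

Lemma scaled_le (y z : 'cV[R]_p) (k : 'I_#|Q|) :
  (forall j, j \in color k -> y j 0 <= z j 0) ->
  (part_mx_scaled Q *m y) k 0 <= (part_mx_scaled Q *m z) k 0.
Proof.
move=> h; rewrite !scaledE ler_wpM2r ?invr_ge0 ?ler0n //; exact: ler_sum.
Qed.

Lemma qconst (x' : 'cV[R]_#|Q|) : Q_constant Q (part_mx Q *m x').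
Proof.
move=> T TQ j1 j2 h1 h2; case: (color_of TQ) => k Hk; subst T.
by rewrite (partE _ h1) (partE _ h2).
Qed.

Lemma box_eq (l u : 'cV[R]_p) (x' : 'cV[R]_#|Q|) :
  (forall T, T \in Q -> forall j1 j2, j1 \in T -> j2 \in T ->
     l j1 0 = l j2 0 /\ u j1 0 = u j2 0) ->
  in_box l u (part_mx Q *m x') <->
  in_box (part_mx_scaled Q *m l) (part_mx_scaled Q *m u) x'.
Proof.
move=> ha.
have lE : forall k j, j \in color k -> (part_mx_scaled Q *m l) k 0 = l j 0.
  move=> k j jk; apply: scaled_const => j' j'k.
  by case: (ha _ (colorQ k) _ _ j'k jk).
have uE : forall k j, j \in color k -> (part_mx_scaled Q *m u) k 0 = u j 0.
  move=> k j jk; apply: scaled_const => j' j'k.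
  by case: (ha _ (colorQ k) _ _ j'k jk).
split => hb.
  move=> k; have [j jk] : exists j, j \in color k by apply/set0Pn; rewrite -card_gt0 color_n0.
  by rewrite (lE _ _ jk) (uE _ _ jk) -(partE x' jk); apply: hb.
move=> j; case: (color_ex j) => k jk.
by rewrite (partE _ jk) -(lE _ _ jk) -(uE _ _ jk); apply: hb.
Qed.

Lemma avg_le (l u : 'cV[R]_p) (f : 'cV[R]_p -> R) (y : 'cV[R]_p) :
  convex_on_box l u f -> differentiable_on_box l u f ->
  (forall T, T \in Q -> forall j1 j2, j1 \in T -> j2 \in T ->
     partial f j1 (part_mx Q *m (part_mx_scaled Q *m y)) =
     partial f j2 (part_mx Q *m (part_mx_scaled Q *m y))) ->
  in_box l u y -> in_box l u (part_mx Q *m (part_mx_scaled Q *m y)) ->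
  f (part_mx Q *m (part_mx_scaled Q *m y)) <= f y.
Proof.
set xb := part_mx Q *m _.
move=> cf df hc hy bx.
apply: le_trans (grad_ineq cf (df _ bx) bx hy).
rewrite D_decomp ?(df _ bx) //.
suff -> : \sum_j (y - xb) j 0 * partial f j xb = 0 by rewrite addr0.
apply: etrans; first exact: sum_colors.
apply: big1 => k _.
have [j0 j0k] : exists j, j \in color k by apply/set0Pn; rewrite -card_gt0 color_n0.
rewrite (eq_bigr (fun j => (y j 0 - (part_mx_scaled Q *m y) k 0) * partial f j0 xb)).
  rewrite -mulr_suml sumrB sumr_const scaledE -[_ *+ _]mulr_natr divfK.
    by rewrite subrr mul0r.
  rewrite pnatr_eq0 -lt0n; exact: color_n0.
move=> j jk.
have -> : (y - xb) j 0 = y j 0 - xb j 0 by rewrite !mxE.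
by rewrite /xb (partE _ jk) (hc _ (colorQ k) j j0 jk j0k).
exact: df.
Qed.
End B.

Theorem theorem1 (R : realType) (m n : nat) (F : 'cV[R]_n -> R)
  (G : 'I_m -> 'cV[R]_n -> R) (b : 'cV[R]_m) (l u : 'cV[R]_n)
  (P : {set {set 'I_m}}) (Q : {set {set 'I_n}}) (rep : 'I_#|P| -> 'I_m) :
  convex_on_box l u F -> (forall i, convex_on_box l u (G i)) ->
  differentiable_on_box l u F -> (forall i, differentiable_on_box l u (G i)) ->
  reduction_coloring F G b l u P Q ->
  (forall k, rep k \in color k) ->
  (forall x : 'cV[R]_n, optimal F G (fun i => b i 0) l u x ->
     reduced_optimal F G b l u P Q rep (part_mx_scaled Q *m x)) /\
  (forall x' : 'cV[R]_#|Q|, reduced_optimal F G b l u P Q rep x' ->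
     optimal F G (fun i => b i 0) l u (part_mx Q *m x')).
Proof.
move=> cF cG dF dG [hP [hQ [ha [hb he]]]] hrep.
have feq : forall y' : 'cV[R]_#|Q|,
  feasible (fun k y => G (rep k) (part_mx Q *m y)) (fun k => (part_mx_scaled P *m b) k 0)
    (part_mx_scaled Q *m l) (part_mx_scaled Q *m u) y' <->
  feasible G (fun i => b i 0) l u (part_mx Q *m y').
  move=> y'; split.
  - case=> hc hbx; have bx : in_box l u (part_mx Q *m y') by apply/(box_eq hQ _ ha).
    split=> // i; case: (color_ex hP i) => k ik.
    have [_ [_ e]] := he _ (qconst hQ y') bx.
    rewrite (e _ (colorQ k) i (rep k) ik (hrep k)).
    apply: le_trans (hc k) _; rewrite (scaled_const hP (c:=b i 0)) // => i' i'k.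
    exact: (hb _ (colorQ k) _ _ i'k ik).
  - case=> hc bx; split; last by apply/(box_eq hQ _ ha).
    move=> k; rewrite (scaled_const hP (c := b (rep k) 0)); first exact: hc.
    move=> i' i'k; exact: (hb _ (colorQ k) _ _ i'k (hrep k)).
have avg : forall y, feasible G (fun i => b i 0) l u y ->
    feasible G (fun i => b i 0) l u (part_mx Q *m (part_mx_scaled Q *m y)) /\
    F (part_mx Q *m (part_mx_scaled Q *m y)) <= F y.
  move=> y [hc hy].
  have bx : in_box l u (part_mx Q *m (part_mx_scaled Q *m y)).
    apply/(box_eq hQ _ ha) => k.
    by apply/andP; split; apply: scaled_le => j _; case/andP: (hy j).
  have [hcF [hdG heG]] := he _ (qconst hQ _) bx.
  split; last exact: (avg_le hQ cF dF hcF hy bx).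
  split => // i; case: (color_ex hP i) => k ik.
  have hGS := avg_le hQ (conv_sum (color k) cG)
    (fun x bx => diff_sum (color k) (fun i => dG i x bx)) (hdG _ (colorQ k)) hy bx.
  have e1 : \sum_(i' in color k) G i' (part_mx Q *m (part_mx_scaled Q *m y)) =
      #|color k|%:R * G i (part_mx Q *m (part_mx_scaled Q *m y)).
    rewrite (eq_bigr (fun _ => G i (part_mx Q *m (part_mx_scaled Q *m y)))).
      by rewrite sumr_const mulr_natl.
    move=> i' i'S; exact: (heG _ (colorQ k) _ _ i'S ik).
  have e2 : \sum_(i' in color k) b i' 0 = #|color k|%:R * b i 0.
    rewrite (eq_bigr (fun _ => b i 0)); first by rewrite sumr_const mulr_natl.
    move=> i' i'S; exact: (hb _ (colorQ k) _ _ i'S ik).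
  have hs : \sum_(i' in color k) G i' y <= \sum_(i' in color k) b i' 0.
    by apply: ler_sum => i' _; exact: hc.
  have := le_trans hGS hs; rewrite e1 e2 ler_pM2l // ltr0n; exact: color_n0.
split.
- move=> x [fx ox]; have [fxb lex] := avg x fx.
  split; first by apply/feq.
  move=> y' /feq fy'; exact: le_trans lex (ox _ fy').
- move=> x' [fx' ox']; split; first by apply/feq.
  move=> y fy; have [fyb ley] := avg y fy.
  apply: le_trans _ ley; apply: ox'; apply/feq; exact: fyb.
Qed.
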